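(* Let $Z=\ell_2$ with canonical basis $(e_n)$ and coordinate functionals $(e_n^* )$, let $\theta:\mathbb{R}\to[0,\infty)$ be $\theta(t)=0$ for $t\le0$, $\theta(t)=t^2$ for $t\ge0$, and define $f:Z\to[0,\infty)$ by $$f(x)=\sum_{n=1}^\infty 2^{-n}\,\theta\big(e_n^*(x)-n\big).$$ Then $f$ is continuous and convex and is not constant on any line $\{x+tv:t\in\mathbb{R}\}$ with $v\neq0$, but there is no continuous linear form $\xi:Z\to\mathbb{R}$ such that $f-\xi$ attains a strict minimum, i.e. there are no $\xi\in Z^*$ and $x\in Z$ with $(f-\xi)(y)>(f-\xi)(x)$ for all $y\neq x$. *)

(* Defs.v *)
(* classical reals. Z = l2 modelled as square-summable sequences nat -> R;
   index n : nat corresponds to the coordinate e_{n+1} of the paper. *)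
From Stdlib Require Import Reals ClassicalEpsilon.
Open Scope R_scope.

Definition rseq := nat -> R.

(* the sum of a series (meaningful when the series converges) *)
Definition series (a : rseq) : R :=
  epsilon (inhabits 0) (fun l => infinite_sum a l).

Definition is_l2 (x : rseq) : Prop :=
  exists l, infinite_sum (fun n => (x n) ^ 2) l.

Definition l2norm (x : rseq) : R := sqrt (series (fun n => (x n) ^ 2)).

Definition sadd (x y : rseq) : rseq := fun n => x n + y n.
Definition ssub (x y : rseq) : rseq := fun n => x n - y n.
Definition sscal (a : R) (x : rseq) : rseq := fun n => a * x n.

Definition l2_continuous (g : rseq -> R) : Prop :=
  forall x, is_l2 x -> forall eps, 0 < eps -> exists delta, 0 < delta /\
    forall y, is_l2 y -> l2norm (ssub y x) < delta -> Rabs (g y - g x) < eps.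

Definition l2_linear (g : rseq -> R) : Prop :=
  forall x y a b, is_l2 x -> is_l2 y ->
    g (sadd (sscal a x) (sscal b y)) = a * g x + b * g y.

Definition l2_dual (xi : rseq -> R) : Prop := l2_linear xi /\ l2_continuous xi.

Definition l2_convex (g : rseq -> R) : Prop :=
  forall x y t, is_l2 x -> is_l2 y -> 0 <= t <= 1 ->
    g (sadd (sscal t x) (sscal (1 - t) y)) <= t * g x + (1 - t) * g y.

Definition theta (t : R) : R := if Rle_dec t 0 then 0 else t ^ 2.

Definition f_ex (x : rseq) : R :=
  series (fun n => (/ 2) ^ (S n) * theta (x n - INR (S n))).

(* Main.v *)
Require Import Defs.
From Stdlib Require Import Arith Reals Lra Lia Psatz Classical ClassicalEpsilon FunctionalExtensionality.
From Coquelicot Require Import Coquelicot.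
Open Scope R_scope.

Lemma fin_sum a N : (forall n, (n > N)%nat -> a n = 0) -> infinite_sum a (sum_f_R0 a N).
Proof.
  intros H eps Heps. exists N. intros n Hn.
  assert (E : sum_f_R0 a n = sum_f_R0 a N).
  { induction Hn. reflexivity. simpl. rewrite IHHn, H by lia. ring. }
  unfold R_dist. rewrite E. replace (_ - _) with 0 by ring. rewrite Rabs_R0. lra.
Qed.

Lemma series_eq a l : infinite_sum a l -> series a = l.
Proof.
  intros H. unfold series.
  apply (uniqueness_sum a). apply (epsilon_spec (inhabits 0) (fun l => infinite_sum a l)).
  exists l; exact H. exact H.
Qed.

Lemma sum_ge_term a N k : (forall n, 0 <= a n) -> (k <= N)%nat -> a k <= sum_f_R0 a N.
Proof.
  intros Hp. induction N; intros Hk.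
  - assert (k = 0%nat) by lia. subst. simpl. lra.
  - destruct (Nat.eq_dec k (S N)).
    + subst. simpl. pose proof (cond_pos_sum a N Hp). lra.
    + simpl. pose proof (Hp (S N)). assert (a k <= sum_f_R0 a N) by (apply IHN; lia). lra.
Qed.

Lemma coord_le z l n : infinite_sum (fun n => z n ^ 2) l -> Rabs (z n) <= sqrt l.
Proof.
  intros H.
  assert (H1 : z n ^ 2 <= l).
  { apply Rle_trans with (sum_f_R0 (fun n => z n ^ 2) n).
    apply (sum_ge_term (fun n => z n ^ 2)). intros; apply pow2_ge_0. lia.
    apply growing_ineq. intros m. simpl. pose proof (pow2_ge_0 (z (S m))). lra.
    exact H. }
  rewrite <- sqrt_Rsqr_abs. apply sqrt_le_1_alt. unfold Rsqr. simpl in H1. lra.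
Qed.

Lemma l2_bound x : is_l2 x -> exists M, 0 <= M /\ forall n, Rabs (x n) <= M.
Proof.
  intros [l H]. exists (sqrt l). split. apply sqrt_pos. intros n. eapply coord_le; eauto.
Qed.

Lemma l2_coord z n : is_l2 z -> Rabs (z n) <= l2norm z.
Proof.
  intros [l H]. unfold l2norm. rewrite (series_eq _ _ H). eapply coord_le; eauto.
Qed.

Lemma is_l2_lin a b x y z : (forall n, z n = a * x n + b * y n) -> is_l2 x -> is_l2 y -> is_l2 z.
Proof.
  intros Hz [lx Hx] [ly Hy].
  assert (E : ex_series (fun n => z n ^ 2)).
  { apply (@ex_series_le R_AbsRing R_CompleteNormedModule) with (fun n => 2 * a ^ 2 * x n ^ 2 + 2 * b ^ 2 * y n ^ 2).
    - intros n. change (norm (z n ^ 2)) with (Rabs (z n ^ 2)). rewrite Hz.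
      rewrite Rabs_pos_eq by apply pow2_ge_0.
      pose proof (pow2_ge_0 (a * x n - b * y n)). simpl in *. nra.
    - apply (ex_series_plus (fun n => scal (2 * a ^ 2) (x n ^ 2)) (fun n => scal (2 * b ^ 2) (y n ^ 2))).
      apply (@ex_series_scal R_AbsRing R_NormedModule). exists lx. apply is_series_Reals; exact Hx.
      apply (@ex_series_scal R_AbsRing R_NormedModule). exists ly. apply is_series_Reals; exact Hy. }
  destruct E as [l Hl]. exists l. apply is_series_Reals; exact Hl.
Qed.

Lemma big_nat K : exists N : nat, K <= INR N.
Proof. destruct (INR_archimed 1 K) as [N HN]; [lra|]. exists N. lra. Qed.

Definition term (z : rseq) (n : nat) : R := (/ 2) ^ (S n) * theta (z n - INR (S n)).

Lemma theta_nonneg t : 0 <= theta t.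
Proof. unfold theta. destruct (Rle_dec t 0). lra. apply pow2_ge_0. Qed.

Lemma theta_zero t : t <= 0 -> theta t = 0.
Proof. unfold theta. destruct (Rle_dec t 0). auto. lra. Qed.

Lemma term_nonneg z n : 0 <= term z n.
Proof. unfold term. apply Rmult_le_pos. apply pow_le. lra. apply theta_nonneg. Qed.

Lemma f_fin z K N : (forall n, Rabs (z n) <= K) -> K <= INR N -> f_ex z = sum_f_R0 (term z) N.
Proof.
  intros HK HN. unfold f_ex. apply series_eq. fold (term z). apply fin_sum.
  intros n Hn. unfold term. rewrite theta_zero. ring.
  assert (INR N < INR (S n)) by (apply lt_INR; lia).
  pose proof (HK n). pose proof (Rle_abs (z n)). lra.
Qed.

Lemma term_zero z K N n : Rabs (z n) <= K -> K <= INR N -> (n > N)%nat -> term z n = 0.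
Proof.
  intros HK HN Hn. unfold term. rewrite theta_zero. ring.
  assert (INR N < INR (S n)) by (apply lt_INR; lia).
  pose proof (Rle_abs (z n)). lra.
Qed.

Lemma half_pow k : 0 < (/ 2) ^ k <= 1.
Proof. induction k; simpl; lra. Qed.

Lemma theta_lip a b K : Rabs a <= K -> Rabs b <= K -> Rabs (theta a - theta b) <= 2 * K * Rabs (a - b).
Proof.
  intros Ha Hb. unfold theta.
  pose proof (Rle_abs a). pose proof (Rle_abs b).
  destruct (Rle_dec a 0), (Rle_dec b 0).
  - replace (0-0) with 0 by ring. rewrite Rabs_R0. pose proof (Rabs_pos (a-b)). pose proof (Rabs_pos a). nra.
  - rewrite Rabs_left1 by nra. rewrite (Rabs_left1 (a-b)) by lra. nra.
  - rewrite Rabs_pos_eq by nra. rewrite (Rabs_pos_eq (a-b)) by lra. nra.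
  - replace (a^2 - b^2) with ((a+b)*(a-b)) by ring. rewrite Rabs_mult.
    apply Rmult_le_compat_r. apply Rabs_pos. rewrite Rabs_pos_eq by lra. lra.
Qed.

Lemma sq_mono u w : 0 <= u <= w -> u ^ 2 <= w ^ 2.
Proof. intros. simpl. nra. Qed.
Lemma theta_convex a b t : 0 <= t <= 1 -> theta (t * a + (1 - t) * b) <= t * theta a + (1 - t) * theta b.
Proof.
  intros Ht. unfold theta.
  destruct (Rle_dec (t * a + (1 - t) * b) 0), (Rle_dec a 0), (Rle_dec b 0).
  all: try (pose proof (pow2_ge_0 a); pose proof (pow2_ge_0 b); nra).
  - pose proof (sq_mono (t*a + (1-t)*b) ((1-t)*b) ltac:(nra)).
    assert (((1-t)*b)^2 = (1-t)*((1-t)*b^2)) by ring.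
    pose proof (pow2_ge_0 b).
    assert ((1-t)*((1-t)*b^2) <= 1*((1-t)*b^2)) by (apply Rmult_le_compat_r; nra). lra.
  - pose proof (sq_mono (t*a + (1-t)*b) (t*a) ltac:(nra)).
    assert ((t*a)^2 = t*(t*a^2)) by ring.
    pose proof (pow2_ge_0 a).
    assert (t*(t*a^2) <= 1*(t*a^2)) by (apply Rmult_le_compat_r; nra). lra.
  - pose proof (pow2_ge_0 (a - b)).
    replace (t * a ^ 2 + (1 - t) * b ^ 2) with ((t * a + (1 - t) * b) ^ 2 + t*(1-t)*(a-b)^2) by ring.
    assert (0 <= t*(1-t)) by nra. nra.
Qed.

Lemma sum_diff_bound a b c N : (forall n, Rabs (a n - b n) <= c) ->
  Rabs (sum_f_R0 a N - sum_f_R0 b N) <= INR (S N) * c.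
Proof.
  intros H. induction N.
  - simpl. rewrite Rmult_1_l. apply H.
  - replace (sum_f_R0 a (S N) - sum_f_R0 b (S N)) with
      ((sum_f_R0 a N - sum_f_R0 b N) + (a (S N) - b (S N))) by (simpl; ring).
    eapply Rle_trans. apply Rabs_triang. rewrite S_INR. pose proof (H (S N)). lra.
Qed.

Lemma sum_conv a b c t s N : (forall n, a n <= t * b n + s * c n) ->
  sum_f_R0 a N <= t * sum_f_R0 b N + s * sum_f_R0 c N.
Proof.
  intros H. induction N; simpl. apply H. pose proof (H (S N)). lra.
Qed.

Lemma part1 : l2_continuous f_ex.
Proof.
  intros x Hx eps Heps. destruct (l2_bound x Hx) as [M [HM0 HM]].
  destruct (big_nat (M + 1)) as [N HN].
  set (K := M + 1 + INR (S N)).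
  assert (HK : 0 <= K) by (unfold K; pose proof (pos_INR (S N)); lra).
  set (C := INR (S N) * (2 * K) + 1).
  assert (HC : 0 < C) by (unfold C; pose proof (pos_INR (S N)); nra).
  exists (Rmin 1 (eps / C)). split.
  { apply Rmin_glb_lt. lra. apply Rdiv_lt_0_compat; lra. }
  intros y Hy Hd.
  set (d := l2norm (ssub y x)) in *.
  assert (Hyx : is_l2 (ssub y x)) by (apply (is_l2_lin 1 (-1) y x); [intros; unfold ssub; ring | auto | auto]).
  assert (Hco : forall n, Rabs (y n - x n) <= d) by (intros n; apply (l2_coord (ssub y x) n Hyx)).
  assert (Hd1 : d < 1) by (eapply Rlt_le_trans; [exact Hd | apply Rmin_l]).
  assert (Hd2 : d < eps / C) by (eapply Rlt_le_trans; [exact Hd | apply Rmin_r]).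
  assert (HyM : forall n, Rabs (y n) <= M + 1).
  { intros n. pose proof (HM n). pose proof (Hco n).
    replace (y n) with (x n + (y n - x n)) by ring.
    pose proof (Rabs_triang (x n) (y n - x n)). lra. }
  assert (HxM : forall n, Rabs (x n) <= M + 1) by (intros n; pose proof (HM n); lra).
  rewrite (f_fin y (M + 1) N HyM HN), (f_fin x (M + 1) N HxM HN).
  eapply Rle_lt_trans. apply (sum_diff_bound _ _ (2 * K * d)).
  - intros n. destruct (le_lt_dec n N) as [Hn | Hn].
    + unfold term. rewrite <- Rmult_minus_distr_l, Rabs_mult.
      destruct (half_pow (S n)) as [Hp1 Hp2]. rewrite (Rabs_pos_eq ((/2) ^ S n)) by lra.
      assert (HS : INR (S n) <= INR (S N)) by (apply le_INR; lia).
      pose proof (pos_INR (S n)).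
      assert (Ht : Rabs (theta (y n - INR (S n)) - theta (x n - INR (S n))) <= 2 * K * d).
      { eapply Rle_trans. apply (theta_lip _ _ K).
        - pose proof (HyM n) as HH. unfold K. revert HH. unfold Rabs.
          repeat destruct Rcase_abs; intros; lra.
        - pose proof (HxM n) as HH. unfold K. revert HH. unfold Rabs.
          repeat destruct Rcase_abs; intros; lra.
        - replace (y n - INR (S n) - (x n - INR (S n))) with (y n - x n) by ring.
          pose proof (Hco n). nra. }
      pose proof (Rabs_pos (theta (y n - INR (S n)) - theta (x n - INR (S n)))). nra.
    + rewrite (term_zero y (M + 1) N n), (term_zero x (M + 1) N n) by auto.
      replace (0 - 0) with 0 by ring. rewrite Rabs_R0.
      pose proof (Rabs_pos (y 0%nat - x 0%nat)). pose proof (Hco 0%nat). nra.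
  - assert (C * d < eps).
    { apply Rmult_lt_compat_l with (r := C) in Hd2; [|lra].
      unfold Rdiv in Hd2. rewrite <- Rmult_assoc, (Rmult_comm C eps), Rmult_assoc, Rinv_r in Hd2 by lra. lra. }
    pose proof (Rabs_pos (y 0%nat - x 0%nat)). pose proof (Hco 0%nat).
    unfold C in H. nra.
Qed.

Lemma part2 : l2_convex f_ex.
Proof.
  intros x y t Hx Hy Ht.
  destruct (l2_bound x Hx) as [Mx [HMx0 HMx]]. destruct (l2_bound y Hy) as [My [HMy0 HMy]].
  destruct (big_nat (Mx + My)) as [N HN].
  assert (Hz : forall n, Rabs (sadd (sscal t x) (sscal (1 - t) y) n) <= Mx + My).
  { intros n. unfold sadd, sscal. eapply Rle_trans. apply Rabs_triang.
    rewrite !Rabs_mult, (Rabs_pos_eq t), (Rabs_pos_eq (1 - t)) by lra.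
    pose proof (HMx n). pose proof (HMy n). pose proof (Rabs_pos (x n)). pose proof (Rabs_pos (y n)). nra. }
  assert (HxM : forall n, Rabs (x n) <= Mx + My) by (intros n; pose proof (HMx n); lra).
  assert (HyM : forall n, Rabs (y n) <= Mx + My) by (intros n; pose proof (HMy n); lra).
  rewrite (f_fin _ _ N Hz HN), (f_fin x _ N HxM HN), (f_fin y _ N HyM HN).
  apply sum_conv. intros n. unfold term, sadd, sscal.
  replace (t * x n + (1 - t) * y n - INR (S n)) with
    (t * (x n - INR (S n)) + (1 - t) * (y n - INR (S n))) by ring.
  pose proof (theta_convex (x n - INR (S n)) (y n - INR (S n)) t Ht).
  destruct (half_pow (S n)). nra.
Qed.

Lemma nonzero_coord (v : rseq) : v <> (fun _ => 0) -> exists k, v k <> 0.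
Proof.
  intros H. apply NNPP. intros H2. apply H. apply functional_extensionality.
  intros k. apply NNPP. intros H3. apply H2. exists k. exact H3.
Qed.

Lemma part3 : forall x v, is_l2 x -> is_l2 v -> v <> (fun _ => 0) ->
     exists t1 t2, f_ex (sadd x (sscal t1 v)) <> f_ex (sadd x (sscal t2 v)).
Proof.
  intros x v Hx Hv Hnz. destruct (nonzero_coord v Hnz) as [k Hk].
  set (F := f_ex (sadd x (sscal 0 v))).
  set (P := 2 ^ (S k)).
  assert (HP : 1 <= P) by (unfold P; clear; induction (S k); simpl; lra).
  set (R0 := P * (Rabs F + 1)).
  assert (HR0 : 1 <= R0) by (unfold R0; pose proof (Rabs_pos F); nra).
  set (T := (R0 + INR (S k) - x k) / v k).
  exists 0, T. intros Heq. fold F in Heq.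
  destruct (l2_bound x Hx) as [Mx [HMx0 HMx]]. destruct (l2_bound v Hv) as [Mv [HMv0 HMv]].
  destruct (big_nat (Mx + Rabs T * Mv + INR k)) as [N HN].
  assert (Hz : forall n, Rabs (sadd x (sscal T v) n) <= Mx + Rabs T * Mv + INR k).
  { intros n. unfold sadd, sscal. eapply Rle_trans. apply Rabs_triang. rewrite Rabs_mult.
    pose proof (HMx n). pose proof (HMv n). pose proof (Rabs_pos T). pose proof (pos_INR k). nra. }
  rewrite (f_fin _ _ N Hz HN) in Heq.
  assert (HkN : (k <= N)%nat).
  { apply INR_le. pose proof (Rabs_pos T). pose proof (Rabs_pos (x 0%nat)). pose proof (HMx 0%nat). nra. }
  pose proof (sum_ge_term (term (sadd x (sscal T v))) N k (term_nonneg _) HkN) as Hge.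
  assert (Hzk : sadd x (sscal T v) k - INR (S k) = R0).
  { unfold sadd, sscal, T. field. exact Hk. }
  unfold term at 1 in Hge. rewrite Hzk in Hge. unfold theta in Hge.
  destruct (Rle_dec R0 0). lra.
  assert (Hinv : (/ 2) ^ S k = / P) by (unfold P; rewrite pow_inv; reflexivity).
  rewrite Hinv in Hge.
  assert (H1 : / P * R0 ^ 2 = R0 * (Rabs F + 1)) by (unfold R0; field; lra).
  pose proof (Rle_abs F). pose proof (Rabs_pos F). nra.
Qed.

Lemma part4 : ~ (exists xi x, l2_dual xi /\ is_l2 x /\
       forall y, is_l2 y -> y <> x -> f_ex y - xi y > f_ex x - xi x).
Proof.
  intros [xi [x [[Hlin _] [Hx Hmin]]]].
  destruct (l2_bound x Hx) as [M [HM0 HM]].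
  destruct (big_nat M) as [n Hn].
  set (e := fun m => if Nat.eq_dec m n then 1 else 0).
  assert (He : is_l2 e).
  { exists (sum_f_R0 (fun m => e m ^ 2) n). apply fin_sum. intros m Hm.
    unfold e. destruct (Nat.eq_dec m n). lia. ring. }
  assert (key : forall t, -1 <= t <= 1 -> t <> 0 -> - t * xi e > 0).
  { intros t Ht Ht0.
    set (y := sadd (sscal 1 x) (sscal t e)).
    assert (Hy : is_l2 y) by (apply (is_l2_lin 1 t x e); [intros; reflexivity | auto | auto]).
    assert (Hyx : y <> x).
    { intros Hyx. assert (y n = x n) by (rewrite Hyx; reflexivity).
      unfold y, sadd, sscal, e in H. destruct (Nat.eq_dec n n); [|congruence]. lra. }
    assert (Hf : f_ex y = f_ex x).
    { unfold f_ex. f_equal. apply functional_extensionality. intros m.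
      unfold y, sadd, sscal, e. destruct (Nat.eq_dec m n).
      - subst m. rewrite !theta_zero. ring.
        + pose proof (Rle_abs (x n)). pose proof (HM n). rewrite S_INR. lra.
        + pose proof (Rle_abs (x n)). pose proof (HM n). rewrite S_INR. lra.
      - f_equal. f_equal. ring. }
    pose proof (Hmin y Hy Hyx) as Hm. rewrite Hf in Hm.
    unfold y in Hm. rewrite (Hlin x e 1 t Hx He) in Hm. lra. }
  pose proof (key (1/2) ltac:(lra) ltac:(lra)). pose proof (key (-1/2) ltac:(lra) ltac:(lra)). lra.
Qed.

Theorem mainTheorem10 :
  l2_continuous f_ex /\
  l2_convex f_ex /\
  (forall x v, is_l2 x -> is_l2 v -> v <> (fun _ => 0) ->
     exists t1 t2, f_ex (sadd x (sscal t1 v)) <> f_ex (sadd x (sscal t2 v))) /\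
  ~ (exists xi x, l2_dual xi /\ is_l2 x /\
       forall y, is_l2 y -> y <> x -> f_ex y - xi y > f_ex x - xi x).
Proof.
  split. exact part1. split. exact part2. split. exact part3. exact part4.
Qed.
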